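(* Let $J>0$, $h\ne0$, $\rho>0$, and $\varepsilon\in\mathcal{E}_{h,\rho}$. Let $f:\mathbb{R}^N\to\mathbb{R}$ be integrable with $\langle|f|\rangle_{\mathrm{MC}}^{m_\pm,\rho;N}\le K$ for some $K\ge0$ whenever these ensembles are defined. Then \[ \left|\langle f\rangle_{\mathrm{MC}}^{\varepsilon,\rho;N}-\langle f\rangle_{\mathrm{MC}}^{m,\rho;N}\right|\le2K\left|\frac{\rho-\left(\frac{|h|}J+\sqrt{\frac{h^2}{J^2}-\frac{2\varepsilon}J}\right)^2}{\rho-\left(\frac{|h|}J-\sqrt{\frac{h^2}{J^2}-\frac{2\varepsilon}J}\right)^2}\right|^{\frac{N-3}2}, \] where $m=-\frac hJ+\mathrm{sgn}(h)\sqrt{\frac{h^2}{J^2}-\frac{2\varepsilon}J}$. In addition, $\langle f\rangle_{\mathrm{MC}}^{\varepsilon,\rho;N}=\langle f\rangle_{\mathrm{MC}}^{m,\rho;N}+O(e^{-cN})$ for some constant $c>0$.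
   Context: Mean-field spherical model: $\Lambda$ finite lattice, $N=|\Lambda|$, fields $\phi\in\mathbb{R}^\Lambda\cong\mathbb{R}^N$, $J>0$, $h\in\mathbb{R}$, energy $H[\phi]=-\frac J{2N}(\sum_x\phi_x)^2-h\sum_x\phi_x$, particle number $\sum_x\phi_x^2$. For $\rho>0$, $|m|<\sqrt\rho$, $\mu_{\mathrm{MC}}^{m,\rho;N}$ is the normalized uniform surface measure on the $(N-2)$-sphere $\{\sum_x\phi_x=mN,\ \sum_x\phi_x^2=\rho N\}$, and $Z_{\mathrm{MC}}(m,\rho;N)=(\rho-m^2)^{(N-3)/2}$. For $\varepsilon\le\frac{h^2}{2J}$ set $m_\pm=-\frac hJ\pm\sqrt{\frac{h^2}{J^2}-\frac{2\varepsilon}J}$. Fixed energy ensemble: if $\varepsilon<\frac{h^2}{2J}$ and $m_+^2,m_-^2<\rho$, $\langle f\rangle_{\mathrm{MC}}^{\varepsilon,\rho;N}=\sum_{\pm}\frac{Z_{\mathrm{MC}}(m_\pm,\rho;N)}{Z_{\mathrm{MC}}(m_+,\rho;N)+Z_{\mathrm{MC}}(m_-,\rho;N)}\langle f\rangle_{\mathrm{MC}}^{m_\pm,\rho;N}$; if $\varepsilon<\frac{h^2}{2J}$ and $\min(m_-^2,m_+^2)<\rho\le\max(m_-^2,m_+^2)$, it equals $\langle f\rangle_{\mathrm{MC}}^{m',\rho;N}$ with $m'$ the one of $m_\pm$ of smaller absolute value; if $\varepsilon=\frac{h^2}{2J}$ and $\rho>\frac{h^2}{J^2}$, it equals $\langle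 f\rangle_{\mathrm{MC}}^{-h/J,\rho;N}$. The set of allowed energies is $\mathcal{E}_{h,\rho}=\{\varepsilon\le\frac{h^2}{2J}:\ |\frac{|h|}J-\sqrt{\frac{h^2}{J^2}-\frac{2\varepsilon}J}|<\sqrt\rho\}$. $O(\cdot)$ refers to $N\to\infty$. *)

(* Defs.v *)
From HB Require Import structures.
From mathcomp Require Import all_boot all_order all_algebra.
From mathcomp Require Import all_classical all_reals all_analysis.
Unset Printing Implicit Defensive.
Import Order.TTheory GRing.Theory Num.Theory.
Local Open Scope classical_set_scope.
Local Open Scope ring_scope.

(** Field configurations phi : R^Lambda, with |Lambda| = N, indexed by 'I_N. *)
(** Cylinder sets {phi | phi_i \in A}, A Borel in R; they generate the
    product (= Borel) sigma-algebra on R^N. *)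
Definition cfg (R : realType) (N : nat) := 'I_N -> R.
HB.instance Definition _ (R : realType) (N : nat) := Choice.on (cfg R N).
HB.instance Definition _ (R : realType) (N : nat) :=
  isPointed.Build (cfg R N) (fun _ => 0%R).

Definition cylinders (R : realType) (N : nat) : set (set (cfg R N)) :=
  [set B | exists (i : 'I_N) (A : set R), measurable A /\
           B = (fun phi : cfg R N => phi i) @^-1` A].

Definition RN (R : realType) (N : nat) := g_sigma_algebraType (cylinders R N).

Definition mc_sphere {R : realType} (N : nat) (m rho : R) : set (RN R N) :=
  [set phi : 'I_N -> R | \sum_(i < N) phi i = m * N%:R /\
                         \sum_(i < N) phi i ^+ 2 = rho * N%:R].

Definition mx_act {R : realType} {N : nat} (M : 'M[R]_N) (phi : RN R N) : RN R N :=
  fun i => \sum_(j < N) M i j * phi j.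

(** Orthogonal transformations of R^N fixing the vector (1,...,1): these are
    exactly the isometries of R^N mapping the sphere mc_sphere m rho onto itself
    (fixing its centre m(1,..,1)); they act transitively on it. *)
Definition sphere_symmetry {R : realType} {N : nat} (M : 'M[R]_N) : Prop :=
  M *m M^T = 1%:M /\ forall i : 'I_N, \sum_(j < N) M i j = 1.

(** mu is the normalized uniform surface measure on mc_sphere m rho:
    a probability measure concentrated on the sphere and invariant under the
    symmetry group of the sphere (the uniform measure is the unique such
    probability measure). *)
Definition is_uniform_MC {R : realType} (N : nat) (m rho : R)
    (mu : probability (RN R N) R) : Prop :=
  mu (mc_sphere N m rho) = 1%E /\
  forall M : 'M[R]_N, sphere_symmetry M ->
    forall A : set (RN R N), measurable A -> mu (mx_act M @^-1` A) = mu A.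

Definition avgMC {R : realType} {N : nat} (mu : probability (RN R N) R)
    (f : RN R N -> R) : R := Rintegral mu setT f.

Definition ZMC {R : realType} (m rho : R) (N : nat) : R :=
  powR (rho - m ^+ 2) ((N%:R - 3) / 2).

Definition m_plus {R : realType} (J h eps : R) : R :=
  - (h / J) + Num.sqrt (h ^+ 2 / J ^+ 2 - 2 * eps / J).
Definition m_minus {R : realType} (J h eps : R) : R :=
  - (h / J) - Num.sqrt (h ^+ 2 / J ^+ 2 - 2 * eps / J).

Definition allowed_energy {R : realType} (J h rho eps : R) : Prop :=
  eps <= h ^+ 2 / (2 * J) /\
  `| `|h| / J - Num.sqrt (h ^+ 2 / J ^+ 2 - 2 * eps / J) | < Num.sqrt rho.

(** Fixed energy ensemble <f>_MC^{eps,rho;N}, given the map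
    E : m |-> <f>_MC^{m,rho;N}.  Outside the three cases of the definition
    (i.e. for eps not allowed) the value is an irrelevant default 0. *)
Definition avgMC_energy {R : realType} (J h eps rho : R) (N : nat)
    (E : R -> R) : R :=
  let mp := m_plus J h eps in
  let mm := m_minus J h eps in
  if [&& eps < h ^+ 2 / (2 * J), mp ^+ 2 < rho & mm ^+ 2 < rho] then
    ZMC mp rho N / (ZMC mp rho N + ZMC mm rho N) * E mp +
    ZMC mm rho N / (ZMC mp rho N + ZMC mm rho N) * E mm
  else if [&& eps < h ^+ 2 / (2 * J),
              Num.min (mp ^+ 2) (mm ^+ 2) < rho &
              rho <= Num.max (mp ^+ 2) (mm ^+ 2)] then
    E (if `|mp| <= `|mm| then mp else mm)
  else if (eps == h ^+ 2 / (2 * J)) && (h ^+ 2 / J ^+ 2 < rho) then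
    E (- (h / J))
  else 0.

(* Main.v *)
Require Import Defs.
From HB Require Import structures.
From mathcomp Require Import all_boot all_order all_algebra.
From mathcomp Require Import all_classical all_reals all_analysis.
From mathcomp Require Import ring lra.
Import Order.TTheory GRing.Theory Num.Theory.
Local Open Scope classical_set_scope.
Local Open Scope ring_scope.

Lemma core (R : realType) (Zm Zo Em Eo K P : R) : 0 < Zm -> 0 <= Zo -> `|Em| <= K -> `|Eo| <= K -> Zo / Zm <= P ->
 `| Zo / (Zm + Zo) * Eo + Zm / (Zm + Zo) * Em - Em | <= 2 * K * P.
Proof.
move=> Zm0 Zo0 hm ho hP.
have ZZ : 0 < Zm + Zo by lra.
have -> : Zo / (Zm + Zo) * Eo + Zm / (Zm + Zo) * Em - Em = Zo / (Zm + Zo) * (Eo - Em).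
  by field; rewrite gt_eqF.
have a0 : 0 <= Zo / (Zm + Zo) by rewrite divr_ge0 // ltW.
have aP : Zo / (Zm + Zo) <= P.
  apply: le_trans hP; apply: ler_wpM2l => //.
  by rewrite lef_pV2 ?posrE //; lra.
have b2 : `|Eo - Em| <= 2 * K by apply: (le_trans (ler_normB _ _)); lra.
rewrite normrM ger0_norm //.
have b0 : 0 <= `|Eo - Em| by [].
nra.
Qed.

Lemma sq_lt_of_norm (R : realType) (x rho : R) : 0 < rho -> `|x| < Num.sqrt rho -> x ^+ 2 < rho.
Proof. by move=> r0; rewrite -sqrtr_sqr ltr_sqrt. Qed.

Lemma Zratio (R : realType) (a b r : R) : 0 < a -> 0 < b ->
  powR a r / powR b r = powR `|a / b| r.
Proof.
move=> a0 b0; rewrite ger0_norm ?divr_ge0 ?ltW //.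
rewrite powRM ?invr_ge0 ?ltW //; congr (_ * _).
rewrite -[b^-1](powR_inv1 (ltW b0)) -powRrM mulN1r powRN //.
Qed.

Lemma other_ex (R : realType) (J h eps : R) : 0 < J -> h != 0 ->
  let s := Num.sqrt (h ^+ 2 / J ^+ 2 - 2 * eps / J) in
  let m := - (h / J) + Num.sg h * s in
  exists o, [/\ (m_plus J h eps = m /\ m_minus J h eps = o) \/
               (m_plus J h eps = o /\ m_minus J h eps = m),
     (`|h| / J - s) ^+ 2 = m ^+ 2, (`|h| / J + s) ^+ 2 = o ^+ 2 &
     (if `|m_plus J h eps| <= `|m_minus J h eps| then m_plus J h eps
      else m_minus J h eps) = m].
Proof.
move=> J0 h0 s m.
have s0 : 0 <= s by apply: sqrtr_ge0.
rewrite /m_plus /m_minus -/s /m.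
have [hlt|hgt|heq] := ltgtP h 0; last by rewrite heq eqxx in h0.
- rewrite ltr0_sg // ltr0_norm //.
  have a0 : 0 < - (h / J) by rewrite oppr_gt0 pmulr_llt0 ?invr_gt0.
  exists (- (h / J) + s); split.
  + by right; split => //; rewrite mulN1r.
  + rewrite mulN1r mulNr; ring.
  + rewrite mulNr; ring.
  + rewrite mulN1r; case: ifP => // H.
    have H2 : (- (h / J) + s) ^+ 2 <= (- (h / J) - s) ^+ 2.
      by rewrite -[X in X <= _]real_normK ?num_real // -[X in _ <= X]real_normK ?num_real // lerXn2r ?nnegrE.
    have : s <= 0 by nra.
    move=> sle; have s00 : s = 0 by apply/le_anti; rewrite sle s0.
    by rewrite s00 subr0 addr0.
- rewrite gtr0_sg // gtr0_norm // mul1r.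
  have a0 : 0 < h / J by rewrite divr_gt0.
  exists (- (h / J) - s); split.
  + by left.
  + ring.
  + ring.
  + case: ifP => // /negbT; rewrite -ltNge => H; exfalso; move: H.
    rewrite ltNge => /negP; apply.
    rewrite -opprD normrN [X in _ <= X]gtr0_norm; last by lra.
    apply: (le_trans (ler_normD _ _)); rewrite normrN gtr0_norm // ger0_norm //.
Qed.

Theorem theorem4p10 (R : realType) (J h rho eps K : R)
  (mu : forall N : nat, R -> probability (RN R N) R)
  (f : forall N : nat, RN R N -> R) :
  0 < J -> h != 0 -> 0 < rho -> allowed_energy J h rho eps -> 0 <= K ->
  (forall (N : nat) (m : R), (2 <= N)%N -> m ^+ 2 < rho -> is_uniform_MC N m rho (mu N m)) ->
  (forall (N : nat) (m : R), (2 <= N)%N ->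
     (m = m_plus J h eps \/ m = m_minus J h eps) -> m ^+ 2 < rho ->
     (mu N m).-integrable setT (EFin \o f N) /\
     avgMC (mu N m) (fun phi => `|f N phi|) <= K) ->
  let s := Num.sqrt (h ^+ 2 / J ^+ 2 - 2 * eps / J) in
  let m := - (h / J) + Num.sg h * s in
  let diff := fun N : nat =>
    avgMC_energy J h eps rho N (fun m' => avgMC (mu N m') (f N))
    - avgMC (mu N m) (f N) in
  (forall N : nat, (2 <= N)%N ->
     `| diff N | <=
     2 * K * powR `| (rho - (`|h| / J + s) ^+ 2) / (rho - (`|h| / J - s) ^+ 2) |
                  ((N%:R - 3) / 2)) /\
  (exists c : R, 0 < c /\ exists C : R, exists N0 : nat,
     forall N : nat, (N0 <= N)%N -> `| diff N | <= C * expR (- (c * N%:R))).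
Proof.
move=> J0 h0 rho0 [epsle hall] K0 _ Hint s m diff.
have s0 : 0 <= s by apply: sqrtr_ge0.
have [ot [Hmo Hsm Hso Hif]] := @other_ex R J h eps J0 h0.
rewrite -/s -/m in Hmo Hsm Hso Hif.
have m2 : m ^+ 2 < rho by rewrite -Hsm; apply: sq_lt_of_norm.
have Eb : forall N x, (2 <= N)%N -> (x = m_plus J h eps \/ x = m_minus J h eps) ->
    x ^+ 2 < rho -> `|avgMC (mu N x) (f N)| <= K.
  move=> N x N2 hx x2; have [Hi Hk] := Hint N x N2 hx x2.
  by apply: le_trans Hk; apply: le_normr_Rintegral.
have mpm : (m = m_plus J h eps \/ m = m_minus J h eps).
  by case: Hmo => -[-> ->]; [left|right].
have [Z|[q [q0 [q1 [qE B]]]]] : (forall N, (2 <= N)%N -> diff N = 0) \/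
   exists q, 0 < q /\ q < 1 /\
     `| (rho - (`|h| / J + s) ^+ 2) / (rho - (`|h| / J - s) ^+ 2) | = q /\
     forall N, (2 <= N)%N -> `|diff N| <= 2 * K * powR q ((N%:R - 3) / 2).
  have hJ0 : 0 < `|h| / J by rewrite divr_gt0 ?normr_gt0.
  move: epsle; rewrite le_eqVlt => /orP[/eqP epseq|epslt].
    have s00 : s = 0.
      rewrite /s epseq (_ : _ - _ = 0) ?sqrtr0 //; by field; rewrite gt_eqF.
    have mE : m = - (h / J) by rewrite /m s00 mulr0 addr0.
    left => N N2; rewrite /diff /avgMC_energy /=.
    rewrite -epseq ltxx eqxx /=.
    have -> : h ^+ 2 / J ^+ 2 < rho by rewrite -expr_div_n -sqrrN -mE.
    by rewrite mE subrr.
  have spos : 0 < s.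
    rewrite /s sqrtr_gt0 (_ : _ - _ = 2 / J * (h ^+ 2 / (2 * J) - eps)).
      by rewrite mulr_gt0 ?divr_gt0 ?subr_gt0.
    by field; rewrite gt_eqF.
  have [ot2|ot2] := ltP (ot ^+ 2) rho.
  - right; exists ((rho - ot ^+ 2) / (rho - m ^+ 2)).
    have q0 : 0 < (rho - ot ^+ 2) / (rho - m ^+ 2) by rewrite divr_gt0 ?subr_gt0.
    split => //; split.
      rewrite ltr_pdivrMr ?subr_gt0 // mul1r -Hso -Hsm; nra.
    split; first by rewrite Hso Hsm ger0_norm // ltW.
    move=> N N2; rewrite /diff /avgMC_energy /= epslt /=.
    have Zm0 : 0 < ZMC m rho N by apply: powR_gt0; rewrite subr_gt0.
    have Zo0 : 0 <= ZMC ot rho N by apply: powR_ge0.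
    have Em : `|avgMC (mu N m) (f N)| <= K by apply: Eb.
    have HP : ZMC ot rho N / ZMC m rho N <=
       powR ((rho - ot ^+ 2) / (rho - m ^+ 2)) ((N%:R - 3) / 2).
      by rewrite /ZMC Zratio ?subr_gt0 // ger0_norm // ltW.
    case: Hmo => -[Hp Hm]; rewrite Hp Hm m2 ot2 /=.
    + rewrite [X in `|X - _|]addrC; apply: core => //.
      by apply: Eb => //; right.
    + rewrite (addrC (ZMC ot rho N)); apply: core => //.
      by apply: Eb => //; left.
  - left => N N2; rewrite /diff /avgMC_energy /= epslt /= Hif.
    have ot2' : (ot ^+ 2 < rho) = false by rewrite ltNge ot2.
    by case: Hmo => -[Hp Hm]; rewrite Hp Hm m2 ot2' /= ?gt_min ?m2 /= ?le_max ot2 ?orbT /= subrr.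
- split.
    move=> N N2; rewrite Z // normr0; apply: mulr_ge0 (powR_ge0 _ _).
    by apply: mulr_ge0.
  exists 1; split => //; exists 0, 2%N => N N2.
  by rewrite Z // normr0 mul0r.
- split; first by move=> N N2; rewrite qE; apply: B.
  have lq : ln q < 0 by apply: ln_lt0; rewrite q0 q1.
  exists (- (ln q) / 2); split; first by lra.
  exists (2 * K * expR (- (3 / 2) * ln q)), 2%N => N N2.
  apply: (le_trans (B N N2)).
  rewrite -[X in _ <= X]mulrA; apply: ler_wpM2l; first by apply: mulr_ge0.
  rewrite /powR gt_eqF // -expRD; rewrite le_eqVlt; apply/orP; left; apply/eqP; congr expR.
  by field.
Qed.
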